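(* Assume hypothesis (A). Then for every $\gamma=(\gamma_1,\dots,\gamma_d)\in\Gamma$, the function $h_\gamma:\mathbb{Z}_+^d\to\mathbb{R}_+$ defined by $$h_\gamma(x)=\sum_{i=1}^d \exp(\overrightarrow{\gamma_i}\cdot x),\qquad x\in\mathbb{Z}_+^d,$$ satisfies $$\limsup_{|x|\to\infty}\frac{\mathcal{L}h_\gamma(x)}{h_\gamma(x)}=-\min_{1\le i\le d}\frac{\gamma_i}{G_{ii}}\Bigl(\frac{\mu_i}{1+\gamma_i}-\nu_i\Bigr).$$
   Context: Jackson network with $d$ queues: arrival rates $\lambda_1,\dots,\lambda_d\ge 0$, service rates $\mu_1,\dots,\mu_d>0$, routing matrix $P=(p_{ij})_{i,j=1}^d$ with nonnegative entries, $p_{ii}=0$, $\sum_j p_{ij}\le 1$, and $p_{i0}=1-\sum_{j=1}^d p_{ij}$. Let $\epsilon^i$ be the $i$-th unit vector of $\mathbb{Z}^d$ and let $q:\mathbb{Z}^d\to\mathbb{R}_+$ be given by $q(\epsilon^i)=\lambda_i$, $q(-\epsilon^i)=\mu_ip_{i0}$, $q(\epsilon^j-\epsilon^i)=\mu_ip_{ij}$ ($i,j\in\{1,\dots,d\}$), and $q(y)=0$ otherwise. The queue-length process $(Z(t))$ is the continuous-time Markov process on $\mathbb{Z}_+^d$ with generator $\mathcal{L}f(y)=\sum_{z\in\mathbb{Z}_+^d}q(z-y)(f(z)-f(y))$, $y\in\mathbb{Z}_+^d$. Hypothesis (A): the matrix $(q(x-y))_{x,y\in\mathbb{Z}^d}$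 is irreducible; equivalently (A1) the spectral radius of $P$ is $<1$ (every customer eventually leaves) and (A2) for every $i$ there are $n\in\mathbb{N}$ and $j$ with $\lambda_jp^{(n)}_{ji}>0$ ($p^{(n)}$ the $n$-step transition probabilities of $P$). Under (A) the traffic equations $\nu_j=\lambda_j+\sum_{i=1}^d\nu_ip_{ij}$, $j=1,\dots,d$, have a unique solution, with all $\nu_i>0$. Let $G=(I-P)^{-1}=\sum_{n\ge0}P^n$. Let $(\xi_n)$ be the Markov chain on $\{0,1,\dots,d\}$ with transition probabilities $p_{ij}$ from $i\in\{1,\dots,d\}$ to $j\in\{0,\dots,d\}$ and $0$ absorbing; for $j\ge1$ let $\tau_j=\inf\{n\ge0:\xi_n=j\}$ ($\inf\emptyset=+\infty$) and $Q_{ij}=\mathbb{P}_i(\tau_j<\infty)$ (so $Q_{ii}=1$). For $\gamma\in\mathbb{R}_+^d$ define vectors $\overrightarrow{\gamma_i}=(\gamma_i^1,\dots,\gamma_i^d)$ by $\gamma_i^j=\log(1+Q_{ji}\gamma_i)$. $\Gamma$ is the set of $\gamma\in\mathbb{R}_+^d$ such that for every $i\in\{1,\dots,d\}$ and every nonzero $v\in\mathbb{R}_+^d$ with $v^i=0$, $\overrightarrow{\gamma_i}\cdot v<\max_{1\le j\le d}\overrightarrow{\gamma_j}\cdot v$ (usual scalar product). *)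

(* Defs.v *)
From Stdlib Require Import Relations.
From HB Require Import structures.
From mathcomp Require Import all_boot all_order all_algebra.
From mathcomp Require Import all_classical all_reals all_analysis.
Set Implicit Arguments. Unset Strict Implicit. Unset Printing Implicit Defensive.
Import Order.TTheory GRing.Theory Num.Theory numFieldNormedType.Exports.
Local Open Scope ring_scope.
Local Open Scope classical_set_scope.

Section Jackson.
Variables (R : realType) (d : nat).
Variables (lam mu : 'I_d -> R) (P : 'M[R]_d).

Definition p0 (i : 'I_d) : R := 1 - \sum_(j < d) P i j.

Definition qrate (v : 'I_d -> int) : R :=
  \sum_(i < d) (lam i * ([forall k, v k == ((k == i) : nat)%:Z])%:R
               + mu i * p0 i * ([forall k, v k == - ((k == i) : nat)%:Z])%:R)
  + \sum_(i < d) \sum_(j < d | j != i)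
      mu i * P i j * ([forall k, v k == ((k == j) : nat)%:Z - ((k == i) : nat)%:Z])%:R.

Definition hypA : Prop :=
  forall x y : 'I_d -> int,
    Relation_Operators.clos_trans ('I_d -> int)
      (fun a b => 0 < qrate (fun k => a k - b k)) x y.

Definition up (i : 'I_d) (y : 'I_d -> nat) : 'I_d -> nat := fun k => (y k + (k == i))%N.
Definition dn (i : 'I_d) (y : 'I_d -> nat) : 'I_d -> nat := fun k => (y k - (k == i))%N.

(* generator L f(y) = sum_{z in Z_+^d} q(z-y) (f z - f y), written out *)
Definition gen (f : ('I_d -> nat) -> R) (y : 'I_d -> nat) : R :=
  \sum_(i < d) lam i * (f (up i y) - f y)
  + \sum_(i < d) (0 < y i)%N%:R * (mu i * p0 i) * (f (dn i y) - f y)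
  + \sum_(i < d) \sum_(j < d | j != i)
      (0 < y i)%N%:R * (mu i * P i j) * (f (up j (dn i y)) - f y).

(* P_i(tau_j <= n) for the chain on {0,..,d} with 0 absorbing *)
Fixpoint hitn (j : 'I_d) (n : nat) (i : 'I_d) : R :=
  match n with
  | 0 => (i == j)%:R
  | n'.+1 => if i == j then 1 else \sum_(k < d) P i k * hitn j n' k
  end.

(* Q_{ij} = P_i(tau_j < oo) = lim_n P_i(tau_j <= n) *)
Definition Qhit (i j : 'I_d) : R := limn (fun n => hitn j n i).

Definition dotv (u v : 'I_d -> R) : R := \sum_(k < d) u k * v k.

Definition gvec (gam : 'I_d -> R) (i : 'I_d) : 'I_d -> R :=
  fun j => ln (1 + Qhit j i * gam i).

Definition inGamma (gam : 'I_d -> R) : Prop :=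
  (forall i, 0 <= gam i) /\
  forall (i : 'I_d) (v : 'I_d -> R),
    (forall k, 0 <= v k) -> (exists k, v k != 0) -> v i = 0 ->
    ((dotv (gvec gam i) v)%:E < \big[Order.max/-oo%E]_(j < d) (dotv (gvec gam j) v)%:E)%E.

Definition hgam (gam : 'I_d -> R) (x : 'I_d -> nat) : R :=
  \sum_(i < d) expR (dotv (gvec gam i) (fun k => (x k)%:R)).

End Jackson.

Definition limsup_infty (R : realType) (d : nat) (g : ('I_d -> nat) -> R) : \bar R :=
  ereal_inf [set ereal_sup [set (g x)%:E | x in [set x | (N <= \sum_(k < d) x k)%N]]
            | N in [set: nat]].

(* Main.v *)
Require Import Defs.
From Stdlib Require Import Relations.
From HB Require Import structures.
From mathcomp Require Import all_boot all_order all_algebra.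
From mathcomp Require Import all_classical all_reals all_analysis.
From mathcomp Require Import ring lra.

Module Part1.
Import Order.TTheory GRing.Theory Num.Theory numFieldNormedType.Exports.
Local Open Scope ring_scope.
Local Open Scope classical_set_scope.

Section Hit.
Variables (R : realType) (d : nat) (P : 'M[R]_d).
Hypothesis P0 : forall i j, 0 <= P i j.
Hypothesis Prow : forall i, \sum_(j < d) P i j <= 1.

Lemma hitn_bnd j n : forall i, 0 <= hitn P j n i <= 1.
Proof.
elim: n => [|n IH] i /=; first by case: (i == j); rewrite ?lexx ?ler01.
case: (i == j); first by rewrite ler01 lexx.
apply/andP; split.
  by apply: sumr_ge0 => k _; rewrite mulr_ge0 // (andP (IH k)).1.
apply: le_trans (Prow i); apply: ler_sum => k _.
by have /andP[h0 h1] := IH k; rewrite ler_piMr.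
Qed.

Lemma hitn_mono j n : forall i, hitn P j n i <= hitn P j n.+1 i.
Proof.
elim: n => [|n IH] i /=.
  case: (i == j) => //.
  by apply: sumr_ge0 => k _; rewrite mulr_ge0 // (andP (hitn_bnd j 0 k)).1.
case: (i == j) => //; apply: ler_sum => k _; exact: ler_wpM2l.
Qed.

Lemma hitn_cvg j i : cvgn (fun n => hitn P j n i).
Proof.
apply: nondecreasing_is_cvgn.
  apply/nondecreasing_seqP => n; exact: hitn_mono.
by exists 1 => _ [n _ <-]; exact: (andP (hitn_bnd j n i)).2.
Qed.

Lemma Qhit_ge0 i j : 0 <= Qhit P i j.
Proof.
apply: limr_ge; first exact: hitn_cvg.
by near=> n; exact: (andP (hitn_bnd j n i)).1.
Unshelve. all: by end_near. Qed.

Lemma Qhit_diag j : Qhit P j j = 1.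
Proof.
rewrite /Qhit.
have -> : (fun n => hitn P j n j) = (fun=> 1) by apply: funext => -[|n] /=; rewrite eqxx.
by rewrite lim_cst.
Qed.

Lemma cvgn_sumR (I : finType) (f : I -> nat -> R) (l : I -> R) :
  (forall k, f k n @[n --> \oo] --> l k) ->
  (\sum_(k : I) f k n) @[n --> \oo] --> \sum_(k : I) l k.
Proof.
move=> H; rewrite /index_enum; elim: (Finite.enum I) => [|a s IH].
  by under eq_cvg do rewrite big_nil; rewrite big_nil; exact: cvg_cst.
under eq_cvg do rewrite big_cons; rewrite big_cons; exact: cvgD.
Qed.

Lemma Qhit_step k j : k != j -> Qhit P k j = \sum_(l < d) P k l * Qhit P l j.
Proof.
move=> kj; rewrite /Qhit.
have -> : (fun n => hitn P j n k) = (fun n => if n is n'.+1 then \sum_(l < d) P k l * hitn P j n' l else (k == j)%:R).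
  by apply: funext => -[|n] //=; rewrite (negbTE kj).
apply: cvg_lim => //.
rewrite -cvg_shiftS /=.
apply: cvgn_sumR => l; apply: cvgMl_tmp; exact: hitn_cvg.
Qed.

End Hit.

End Part1.
Import Part1.

Module Part2.
Import Order.TTheory GRing.Theory Num.Theory numFieldNormedType.Exports.
Local Open Scope ring_scope.

Section Inv.
Variables (R : realType) (d : nat) (lam mu : 'I_d -> R) (P : 'M[R]_d).
Hypothesis lam0 : forall i, 0 <= lam i.
Hypothesis mu0 : forall i, 0 < mu i.
Hypothesis P0 : forall i j, 0 <= P i j.
Hypothesis Prow : forall i, \sum_(j < d) P i j <= 1.

Lemma p0_ge0 i : 0 <= p0 P i.
Proof. by rewrite /p0 subr_ge0. Qed.

Lemma mul_ind0 (b : bool) (c : R) : (b -> c = 0) -> c * b%:R = 0.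
Proof. by case: b => [->|]; rewrite ?mul0r ?mulr0. Qed.

Lemma sum_ind (S : pred 'I_d) (j : 'I_d) :
  \sum_(k | S k) (((k == j) : nat)%:Z) = ((S j : nat)%:Z).
Proof.
rewrite (big_mkcond S) (bigD1 j) //= big1 => [|k kj].
  by rewrite eqxx addr0; case: (S j).
by rewrite (negbTE kj); case: (S k).
Qed.

Variable S : pred 'I_d.
Hypothesis Sexit : forall k, S k -> p0 P k = 0.
Hypothesis Sclosed : forall k l, S k -> 0 < P k l -> S l.

Lemma qrate_pos_sum (v : 'I_d -> int) :
  0 < qrate lam mu P v -> 0 <= \sum_(k | S k) v k.
Proof.
move=> qp; rewrite leNgt; apply/negP => sneg.
suff : qrate lam mu P v = 0 by move=> h; rewrite h ltxx in qp.
rewrite /qrate big1 ?add0r => [|i _].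
  apply: big1 => i _; apply: big1 => j ji.
  apply: mul_ind0 => /forallP H.
  have Hv : forall k, v k = ((k == j) : nat)%:Z - ((k == i) : nat)%:Z by move=> k; apply/eqP.
  case Si: (S i); last first.
    move: sneg; rewrite (eq_bigr (fun k => ((k == j) : nat)%:Z)).
      by rewrite sum_ind; case: (S j).
    move=> k Sk; rewrite Hv; have -> : (k == i) = false.
      by apply/negP => /eqP ki; rewrite ki Si in Sk.
    by rewrite subr0.
  case Sj: (S j).
    move: sneg; rewrite (eq_bigr (fun k => ((k == j) : nat)%:Z - ((k == i) : nat)%:Z)) => [|k _]; last exact: Hv.
    by rewrite sumrB !sum_ind Si Sj subrr ltxx.
  have : ~~ (0 < P i j) by apply/negP => /(Sclosed i j Si); rewrite Sj.
  rewrite -leNgt => Pij; have -> : P i j = 0 by apply/le_anti; rewrite Pij P0.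
  by rewrite mulr0.
rewrite mul_ind0 ?add0r.
  apply: mul_ind0 => /forallP H.
  have Hv : forall k, v k = - ((k == i) : nat)%:Z by move=> k; apply/eqP.
  case Si: (S i); first by rewrite Sexit // mulr0.
  move: sneg; rewrite big1 ?ltxx // => k Sk; rewrite Hv; have -> : (k == i) = false.
    by apply/negP => /eqP ki; rewrite ki Si in Sk.
  by rewrite oppr0.
move=> /forallP H; exfalso; move: sneg.
rewrite (eq_bigr (fun k => ((k == i) : nat)%:Z)) => [|k _]; last exact/eqP.
by rewrite sum_ind; case: (S i).
Qed.

Definition phi (a : 'I_d -> int) : int := \sum_(k | S k) a k.

Lemma clos_phi x y :
  Relation_Operators.clos_trans ('I_d -> int)
      (fun a b => 0 < qrate lam mu P (fun k => a k - b k)) x y ->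
  phi y <= phi x.
Proof.
elim => [a b /qrate_pos_sum|a b c _ IH1 _ IH2]; last exact: le_trans IH2 IH1.
by rewrite /phi sumrB subr_ge0.
Qed.


End Inv.

Section Inv2.
Variables (R : realType) (d : nat) (lam mu : 'I_d -> R) (P : 'M[R]_d).
Hypothesis lam0 : forall i, 0 <= lam i.
Hypothesis mu0 : forall i, 0 < mu i.
Hypothesis P0 : forall i j, 0 <= P i j.
Hypothesis Prow : forall i, \sum_(j < d) P i j <= 1.

Lemma IP_unit : hypA lam mu P -> (1%:M - P) \in unitmx.
Proof.
move=> hA; apply/negPn/negP => nU.
have : \det (1%:M - P)^T == 0.
  by rewrite det_tr; move: nU; rewrite unitmxE unitfE negbK.
move=> /det0P [v v0 vA].
pose u k := v ord0 k.
have ueq : forall k, u k = \sum_(l < d) P k l * u l.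
  move=> k; have := congr1 (fun M : 'rV[R]_d => M ord0 k) vA; rewrite !mxE => h.
  have h' : \sum_j (v ord0 j * (j == k)%:R - P k j * u j) = 0.
    rewrite -[RHS]h; apply: eq_bigr => j _; rewrite !mxE.
    by rewrite mulrBr eq_sym [P k j * _]mulrC.
  apply/eqP; rewrite -subr_eq0; apply/eqP; rewrite -[RHS]h'.
  rewrite sumrB; congr (_ - _).
  rewrite (bigD1 k) //= eqxx mulr1 big1 ?addr0 // => l lk.
  by rewrite (negbTE lk) mulr0.
have [k1 uk1] : exists k, u k != 0.
  apply/existsP; apply: contraNT v0 => /existsPn H; apply/eqP/rowP => j.
  rewrite [RHS]mxE; exact/eqP/negbNE/H.
have [k0 _ Hk0] := @arg_maxP _ _ _ k1 xpredT (fun k => `|u k|) isT.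
set M := `|u k0| in Hk0.
have Mge : forall k, `|u k| <= M by move=> k; exact: Hk0.
have M0 : 0 < M by apply: lt_le_trans (Mge k1); rewrite normr_gt0.
pose S k := `|u k| == M.
have Skey : forall k, S k -> \sum_(l < d) P k l = 1 /\ \sum_(l < d) P k l * (M - `|u l|) = 0.
  move=> k /eqP Sk.
  have h1 : M <= \sum_(l < d) P k l * `|u l|.
    rewrite -Sk ueq; apply: le_trans (ler_norm_sum _ _ _) _.
    by apply: ler_sum => l _; rewrite normrM ger0_norm.
  have h2 : \sum_(l < d) P k l * `|u l| <= M * \sum_(l < d) P k l.
    rewrite mulr_sumr; apply: ler_sum => l _; rewrite mulrC; exact: ler_wpM2r.
  have h3 : M * \sum_(l < d) P k l <= M by rewrite ler_piMr // ltW.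
  have e1 : M * \sum_(l < d) P k l = M by apply/le_anti; rewrite h3 (le_trans h1 h2).
  split.
    by apply: (mulfI (lt0r_neq0 M0)); rewrite e1 mulr1.
  rewrite (eq_bigr (fun l => M * P k l - P k l * `|u l|)); last by move=> l _; rewrite mulrBr mulrC.
  rewrite sumrB -mulr_sumr e1; apply/eqP; rewrite subr_eq0 eq_sym; apply/eqP/le_anti.
  by rewrite h1 (le_trans h2 h3).
have Sexit : forall k, S k -> p0 P k = 0.
  by move=> k /Skey [h _]; rewrite /p0 h subrr.
have Sclosed : forall k l, S k -> 0 < P k l -> S l.
  move=> k l /Skey [_ h] Pkl.
  have hn : forall i, xpredT i -> 0 <= P k i * (M - `|u i|).
    by move=> i _; rewrite mulr_ge0 // subr_ge0.
  have := @psumr_eq0P _ _ xpredT (fun l => P k l * (M - `|u l|)) hn h l isT.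
  move=> /= /eqP; rewrite mulf_eq0 (gt_eqF Pkl) /= subr_eq0 => /eqP Ml.
  by rewrite /S -Ml eqxx.
have := @clos_phi R d lam mu P P0 S Sexit Sclosed _ _ (hA (fun=> 0) (fun k => ((k == k0) : nat)%:Z)).
rewrite /phi sum_ind big1 // /S eqxx.
by [].
Qed.

End Inv2.

End Part2.
Import Part2.

Module Part3.
Import Order.TTheory GRing.Theory Num.Theory numFieldNormedType.Exports.
Local Open Scope ring_scope.

Section Alg.
Variables (R : realType) (d : nat) (lam mu : 'I_d -> R) (P : 'M[R]_d) (nu gam : 'I_d -> R).
Hypothesis P0 : forall i j, 0 <= P i j.
Hypothesis Pdiag : forall i, P i i = 0.
Hypothesis Prow : forall i, \sum_(j < d) P i j <= 1.
Hypothesis traffic : forall j, nu j = lam j + \sum_(i < d) nu i * P i j.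

Local Notation Q := (Qhit P).
Definition rr j := \sum_(l < d) P j l * Q l j.
Definition AA j := \sum_(k < d) lam k * Q k j.

Lemma w_eq i j : \sum_(k < d) P i k * Q k j = Q i j - (i == j)%:R * (1 - rr j).
Proof.
have [->|ij] := eqVneq i j; first by rewrite Qhit_diag mul1r opprB addrC subrK.
by rewrite mul0r subr0 Qhit_step.
Qed.

Lemma AA_eq j : AA j = nu j * (1 - rr j).
Proof.
rewrite /AA (eq_bigr (fun k => nu k * Q k j - \sum_(i < d) nu i * P i k * Q k j)); last first.
  by move=> k _; rewrite [in RHS](traffic k) mulrDl mulr_suml addrK.
rewrite sumrB.
have -> : \sum_(k < d) \sum_(i < d) nu i * P i k * Q k j =
          \sum_(i < d) nu i * (Q i j - (i == j)%:R * (1 - rr j)).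
  rewrite exchange_big /=; apply: eq_bigr => i _.
  by rewrite -w_eq mulr_sumr; apply: eq_bigr => k _; rewrite mulrA.
rewrite -sumrB (bigD1 j) //= big1 ?addr0 => [|i ij]; last first.
  by rewrite (negbTE ij) mul0r subr0 subrr.
by rewrite eqxx mul1r -mulrBr opprB (addrC (Q j j)) subrK.
Qed.

Lemma G_eq j : (1%:M - P) \in unitmx -> invmx (1%:M - P) j j * (1 - rr j) = 1.
Proof.
move=> U.
pose q : 'cV[R]_d := \col_k Q k j.
pose e : 'cV[R]_d := \col_k (k == j)%:R.
have Aq : (1%:M - P) *m q = (1 - rr j) *: e.
  apply/colP => k; rewrite !mxE.
  rewrite (eq_bigr (fun l => (k == l)%:R * Q l j - P k l * Q l j)); last first.
    by move=> l _; rewrite !mxE mulrBl.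
  rewrite sumrB w_eq (bigD1 k) //= eqxx mul1r big1 ?addr0; last first.
    by move=> l lk; rewrite eq_sym (negbTE lk) mul0r.
  by rewrite opprB addrC subrK mulrC.
have h := congr1 (fun M : 'cV[R]_d => (invmx (1%:M - P) *m M) j ord0) Aq.
rewrite /= mulKmx // -scalemxAr in h.
move: h; move: (invmx (1%:M - P)) => G.
have Ge : forall l, e l ord0 = (l == j)%:R by move=> l; rewrite mxE.
have qj : q j ord0 = 1 by rewrite mxE Qhit_diag.
have Gej : (G *m e) j ord0 = G j j.
  rewrite mxE; under eq_bigr do rewrite Ge.
  rewrite (bigD1 j) //= eqxx mulr1 big1 ?addr0 // => l lj.
  by rewrite (negbTE lj) mulr0.
rewrite qj mxE Gej => h; rewrite [RHS]h; exact: mulrC.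
Qed.

End Alg.

End Part3.
Import Part3.

Module Part4.
Import Order.TTheory GRing.Theory Num.Theory numFieldNormedType.Exports.
Local Open Scope ring_scope.

Section Gen.
Variables (R : realType) (d : nat) (lam mu : 'I_d -> R) (P : 'M[R]_d) (gam : 'I_d -> R).
Hypothesis P0 : forall i j, 0 <= P i j.
Hypothesis Pdiag : forall i, P i i = 0.
Hypothesis Prow : forall i, \sum_(j < d) P i j <= 1.
Hypothesis gam0 : forall i, 0 <= gam i.

Local Notation Q := (Qhit P).
Definition ee j (y : 'I_d -> nat) := expR (dotv (gvec P gam j) (fun k => (y k)%:R)).
Definition aa i j := 1 + Q i j * gam j.

Lemma aa_gt0 i j : 0 < aa i j.
Proof. by rewrite /aa ltr_wpDr // ?ler01 // mulr_ge0 // Qhit_ge0. Qed.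

Lemma expR_gvec j i : expR (gvec P gam j i) = aa i j.
Proof. by rewrite /gvec lnK // posrE aa_gt0. Qed.

Lemma dotv_up (g : 'I_d -> R) i y :
  dotv g (fun k => (up i y k)%:R) = dotv g (fun k => (y k)%:R) + g i.
Proof.
rewrite /dotv /up; under eq_bigr do rewrite natrD mulrDr.
rewrite big_split /=; congr (_ + _); rewrite (bigD1 i) //= eqxx mulr1 big1 ?addr0 // => k ki.
by rewrite (negbTE ki) mulr0.
Qed.

Lemma dotv_dn (g : 'I_d -> R) i y : (0 < y i)%N ->
  dotv g (fun k => (dn i y k)%:R) = dotv g (fun k => (y k)%:R) - g i.
Proof.
move=> yi; rewrite /dotv /dn.
have h : forall k, ((y k - (k == i))%N%:R : R) = (y k)%:R - (k == i)%:R.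
  by move=> k; rewrite natrB //; case: eqP => [->|].
under eq_bigr do rewrite h mulrBr.
rewrite sumrB; congr (_ - _); rewrite (bigD1 i) //= eqxx mulr1 big1 ?addr0 // => k ki.
by rewrite (negbTE ki) mulr0.
Qed.

Lemma ee_up j i y : ee j (up i y) = ee j y * aa i j.
Proof. by rewrite /ee dotv_up expRD expR_gvec. Qed.

Lemma ee_dn j i y : (0 < y i)%N -> ee j (dn i y) = ee j y / aa i j.
Proof. by move=> yi; rewrite /ee dotv_dn // expRD expRN expR_gvec. Qed.

Lemma ee_updn j i l y : (0 < y i)%N -> ee j (up l (dn i y)) = ee j y / aa i j * aa l j.
Proof. by move=> yi; rewrite ee_up ee_dn. Qed.

Lemma gen_sum (F : 'I_d -> ('I_d -> nat) -> R) y :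
  gen lam mu P (fun x => \sum_(j < d) F j x) y = \sum_(j < d) gen lam mu P (F j) y.
Proof.
rewrite /gen !big_split /=; congr (_ + _ + _).
- rewrite exchange_big /=; apply: eq_bigr => i _; rewrite -sumrB mulr_sumr //.
- rewrite exchange_big /=; apply: eq_bigr => i _; rewrite -sumrB mulr_sumr //.
- rewrite exchange_big /=; apply: eq_bigr => i _.
  rewrite exchange_big /=; apply: eq_bigr => l _; rewrite -sumrB mulr_sumr //.
Qed.


Local Notation r := (rr R d P).
Local Notation AAj := (AA R d lam P).

Lemma gen_B i j y :
  (0 < y i)%N%:R * (mu i * p0 P i) * (ee j (dn i y) - ee j y) +
  \sum_(l < d | l != i) (0 < y i)%N%:R * (mu i * P i l) * (ee j (up l (dn i y)) - ee j y)
  = ee j y * ((i == j)%:R * ((0 < y j)%N%:R * (mu j * gam j * (r j - 1) / (1 + gam j)))).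
Proof.
case yi: (0 < y i)%N; last first.
  rewrite mul0r mul0r add0r big1 => [|l _]; last by rewrite !mul0r.
  have [ij|ij] := eqVneq i j; last by rewrite mul0r mulr0.
  by rewrite -ij yi !mul0r !mulr0.
set c := (true : nat)%:R.
have c1 : c = 1 :> R by [].
set e := ee j y.
have K1 : \sum_(l < d | l != i) c * (mu i * P i l) * (ee j (up l (dn i y)) - e) =
   \sum_(l < d) (c * mu i * (e / aa i j * (P i l * aa l j) - e * P i l)).
  rewrite [RHS](bigD1 i) //= Pdiag mul0r !mulr0 subrr mulr0 add0r.
  by apply: eq_bigr => l _; rewrite ee_updn // -/e; ring.
rewrite K1 -mulr_sumr sumrB -!mulr_sumr.
have Sa : \sum_(l < d) P i l * aa l j = \sum_(l < d) P i l + gam j * \sum_(l < d) P i l * Q l j.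
  rewrite mulr_sumr -big_split; apply: eq_bigr => l _ /=; rewrite /aa; ring.
rewrite Sa (@w_eq R d P P0 Prow) ee_dn // -/e /p0 c1.
have aa0 : aa i j != 0 by rewrite gt_eqF // aa_gt0.
have [ij|ij] := eqVneq i j.
  rewrite -ij yi Qhit_diag.
  move: aa0; rewrite /aa -ij Qhit_diag mul1r => aa0.
  set S := \sum_(l < d) P i l.
  have -> : (true : nat)%:R = 1 :> R by [].
  field.
  done.
rewrite /=.
move: aa0; rewrite /aa => aa0.
set S := \sum_(l < d) P i l.
have -> : (false : nat)%:R = 0 :> R by [].
field.
by rewrite aa0 andbT gt_eqF // ltr_wpDr ?ler01.
Qed.

Lemma gen_ee j y :
  gen lam mu P (ee j) y =
  ee j y * (gam j * AAj j + (0 < y j)%N%:R * (mu j * gam j * (r j - 1) / (1 + gam j))).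
Proof.
rewrite /gen -addrA.
have -> : \sum_(i < d) (0 < y i)%N%:R * (mu i * p0 P i) * (ee j (dn i y) - ee j y) +
  \sum_(i < d) \sum_(l < d | l != i) (0 < y i)%N%:R * (mu i * P i l) * (ee j (up l (dn i y)) - ee j y)
  = \sum_(i < d) ee j y * ((i == j)%:R * ((0 < y j)%N%:R * (mu j * gam j * (r j - 1) / (1 + gam j)))).
  by rewrite -big_split; apply: eq_bigr => i _ /=; exact: gen_B.
rewrite -mulr_sumr.
set X := (0 < y j)%N%:R * _.
have -> : \sum_(i < d) (i == j)%:R * X = X.
  rewrite (bigD1 j) //= eqxx mul1r big1 ?addr0 // => i ij.
  by rewrite (negbTE ij) mul0r.
rewrite mulrDr; congr (_ + _).
rewrite /AA !mulr_sumr; apply: eq_bigr => i _; rewrite ee_up /aa; ring.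
Qed.

End Gen.

End Part4.
Import Part4.

Module Part5.
Import Order.TTheory GRing.Theory Num.Theory numFieldNormedType.Exports.
Local Open Scope ring_scope.
Local Open Scope classical_set_scope.

Section Cont.
Variables (R : realType) (d : nat).

Lemma cont_lin (c : 'I_d -> R) (r : seq 'I_d) :
  continuous (fun v : 'rV[R]_d => \sum_(i <- r) c i * v ord0 i).
Proof.
elim: r => [|a r IH] v.
  under eq_fun do rewrite big_nil. exact: cst_continuous.
under eq_fun do rewrite big_cons.
have h1 : {for v, continuous (fun v : 'rV[R]_d => c a * v ord0 a)}.
  exact: (@continuousM R _ (fun=> c a) (fun v : 'rV[R]_d => v ord0 a) v (@cst_continuous _ _ (c a) v) (@coord_continuous R 1 d ord0 a v)).
exact: (@continuousD R R^o _ (fun v : 'rV[R]_d => c a * v ord0 a) (fun v => \sum_(i <- r) c i * v ord0 i) v h1 (IH v)).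
Qed.

Lemma cont_max (f : 'I_d -> 'rV[R]_d -> R) (r : seq 'I_d) :
  (forall k, continuous (f k)) ->
  continuous (fun v : 'rV[R]_d => \big[Order.max/0]_(k <- r) f k v).
Proof.
move=> fc; elim: r => [|a r IH] v.
  under eq_fun do rewrite big_nil. exact: cst_continuous.
under eq_fun do rewrite big_cons.
exact: (@continuous_max R _ (f a) (fun v => \big[Order.max/0]_(k <- r) f k v) v (fc a v) (IH v)).
Qed.

End Cont.

Lemma bigmax_cases (R : realType) (I : Type) (r : seq I) (f : I -> R) :
  \big[Order.max/0]_(k <- r) f k = 0 \/ exists k, \big[Order.max/0]_(k <- r) f k = f k.
Proof.
elim: r => [|a r [IH|[k IH]]]; rewrite ?big_nil ?big_cons; first by left.
- rewrite IH maxEle; case: ifP => _; [by left | by right; exists a].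
- by rewrite IH maxEle; case: ifP => _; right; [exists k | exists a].
Qed.

Section Dom.
Variables (R : realType) (d : nat) (P : 'M[R]_d) (gam : 'I_d -> R) (j : 'I_d).
Definition LL k (v : 'I_d -> R) := dotv (gvec P gam k) v.
Hypothesis Hg : forall v, (forall k, 0 <= v k) -> (exists k, v k != 0) -> v j = 0 ->
  exists k, LL j v < LL k v.

Definition Fm (v : 'rV[R]_d) :=
  \big[Order.max/0]_(k < d) (LL k (fun i => v ord0 i) - LL j (fun i => v ord0 i)).

Lemma Fm_cont : continuous Fm.
Proof.
apply: cont_max => k.
have -> : (fun v : 'rV[R]_d => LL k (fun i => v ord0 i) - LL j (fun i => v ord0 i)) =
  (fun v => \sum_(i <- index_enum 'I_d) (gvec P gam k i - gvec P gam j i) * v ord0 i).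
  apply: funext => v; rewrite /LL /dotv -sumrB; apply: eq_bigr => i _; exact: (esym (mulrBl _ _ _)).
exact: cont_lin.
Qed.

Lemma Fm_ge k (v : 'rV[R]_d) : LL k (fun i => v ord0 i) - LL j (fun i => v ord0 i) <= Fm v.
Proof. exact: (le_bigmax _ (fun k => LL k (fun i => v ord0 i) - LL j (fun i => v ord0 i)) k). Qed.

Lemma Fm_pos (v : 'rV[R]_d) : (forall k, 0 <= v ord0 k) -> (exists k, v ord0 k != 0) -> v ord0 j = 0 -> 0 < Fm v.
Proof.
move=> h1 h2 h3; have [k hk] := @Hg (fun i => v ord0 i) h1 h2 h3.
by apply: lt_le_trans (Fm_ge k v); rewrite subr_gt0.
Qed.

Lemma LL_scale k (x : 'I_d -> R) t : LL k (fun i => x i / t) = LL k x / t.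
Proof. by rewrite /LL /dotv mulr_suml; apply: eq_bigr => i _; rewrite mulrA. Qed.

Lemma dom_m m : m != j -> exists2 δ, 0 < δ & forall x : 'I_d -> R, x j = 0 ->
  (forall i, 0 <= x i <= x m) -> 0 < x m -> exists k, δ * x m <= LL k x - LL j x.
Proof.
move=> mj.
pose I i : set R := if i == m then `[1, 1]%classic else if i == j then `[0, 0]%classic else `[0, 1]%classic.
pose A := [set v : 'rV[R]_d | forall i, I i (v ord0 i)].
have cA : compact A.
  apply: rV_compact => i; rewrite /I; case: ifP => _; last case: ifP => _; exact: segment_compact.
have A0 : A !=set0.
  exists (\row_i (if i == m then 1 else 0)) => i; rewrite mxE /I.
  case: ifP => _; first by rewrite /= in_itv /= lexx.
  by case: ifP => _; rewrite /= in_itv /= lexx ?ler01.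
have [c cinA cmin] := EVT_min_rV A0 cA (@continuous_subspaceT _ _ A Fm Fm_cont).
have cA' : A c by move: cinA; rewrite inE.
have dpos : 0 < Fm c.
  apply: Fm_pos.
  - move=> k; have := cA' k; rewrite /I; case: ifP => _; last case: ifP => _;
    rewrite /= in_itv /= => /andP[h1 h2] //; exact: le_trans ler01 h1.
  - exists m; have := cA' m; rewrite /I eqxx /= in_itv /= => /andP[h1 h2].
    by apply/eqP => h; rewrite h in h1; move: h1; rewrite ler10.
  - have := cA' j; rewrite /I eq_sym (negbTE mj) eqxx /= in_itv /= => /andP[h1 h2].
    by apply/le_anti; rewrite h1 h2.
exists (Fm c) => // x xj xb xm.
pose v := \row_i (x i / x m).
have vA : A v.
  move=> i; rewrite mxE /I.
  have [->|im] := eqVneq i m; first by rewrite /= in_itv /= divff ?lexx // gt_eqF.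
  have [->|ij] := eqVneq i j; first by rewrite /= in_itv /= xj mul0r lexx.
  rewrite /= in_itv /=; have /andP[h1 h2] := xb i.
  by rewrite divr_ge0 ?ler_pdivrMr ?mul1r // ltW.
have := cmin v; rewrite inE => /(_ vA) hv.
have [h0|[k hk]] := @bigmax_cases R _ (index_enum 'I_d) (fun k => LL k (fun i => v ord0 i) - LL j (fun i => v ord0 i)).
  by exfalso; move: hv; rewrite /Fm h0 leNgt dpos.
exists k; move: hv; rewrite /Fm hk.
have -> : (fun i => v ord0 i) = (fun i => x i / x m) by apply: funext => i; rewrite mxE.
by rewrite !LL_scale -mulrBl ler_pdivlMr.
Qed.

Lemma dom_all : exists2 δ, 0 < δ & forall m, m != j -> forall x : 'I_d -> R, x j = 0 ->
  (forall i, 0 <= x i <= x m) -> 0 < x m -> exists k, δ * x m <= LL k x - LL j x.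
Proof.
suff : forall s : seq 'I_d, exists2 δ, 0 < δ & forall m, m \in s -> m != j -> forall x : 'I_d -> R, x j = 0 ->
  (forall i, 0 <= x i <= x m) -> 0 < x m -> exists k, δ * x m <= LL k x - LL j x.
  move=> /(_ (enum 'I_d)) [δ δ0 H]; exists δ => // m; apply: H; by rewrite mem_enum.
elim => [|a s [δ1 δ10 IH]]; first by exists 1.
have [aj|aj] := eqVneq a j.
  exists δ1 => // m; rewrite in_cons => /orP[/eqP->|ms]; first by rewrite aj eqxx.
  exact: IH.
have [δ2 δ20 H2] := @dom_m a aj.
exists (Order.min δ1 δ2); first by rewrite lt_min δ10 δ20.
move=> m; rewrite in_cons => /orP[/eqP->|ms] mj x xj xb xm.
  have [k hk] := H2 x xj xb xm; exists k; apply: le_trans hk.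
  by rewrite ler_pM2r // ge_min lexx orbT.
have [k hk] := IH m ms mj x xj xb xm; exists k; apply: le_trans hk.
by rewrite ler_pM2r // ge_min lexx.
Qed.

Hypothesis d0 : (0 < d)%N.

Lemma dom_nat : exists2 δ, 0 < δ & forall x : 'I_d -> nat, x j = 0%N ->
  exists k, δ * (\sum_(i < d) x i)%N%:R <= LL k (fun i => (x i)%:R) - LL j (fun i => (x i)%:R).
Proof.
have [δ δ0 H] := dom_all.
exists (δ / d%:R); first by rewrite divr_gt0 // ltr0n.
move=> x xj.
have [m _ Hm] := @arg_maxnP _ j xpredT x isT.
have xle : forall i, (x i <= x m)%N by move=> i; exact: Hm.
have sle : (\sum_(i < d) x i <= d * x m)%N.
  have h : (\sum_(i < d) x i <= \sum_(i < d) x m)%N by apply: leq_sum => i _; exact: xle.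
  by apply: leq_trans h _; rewrite big_const_ord iter_addn_0 mulnC.
case: (posnP (x m)) => [xm0|xm].
  exists j; rewrite subrr.
  have -> : (\sum_(i < d) x i)%N = 0%N by apply/eqP; rewrite -leqn0; move: sle; rewrite xm0 muln0.
  by rewrite mulr0.
have mj : m != j by apply/eqP => mj; rewrite mj xj in xm.
have h1 : ((x j)%:R : R) = 0 by rewrite xj.
have h2 : forall t : 'I_d, 0 <= ((x t)%:R : R) <= (x m)%:R.
  by move=> t; apply/andP; split; [exact: ler0n | rewrite ler_nat xle].
have h3 : (0 : R) < (x m)%:R by rewrite ltr0n.
have [k hk] := H m mj (fun i => (x i)%:R) h1 h2 h3.
exists k; apply: le_trans hk.
by rewrite mulrAC ler_pdivrMr ?ltr0n // -mulrA ler_pM2l // -natrM ler_nat mulnC.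
Qed.

End Dom.

End Part5.
Import Part5.

Module Part6.
Import Order.TTheory GRing.Theory Num.Theory numFieldNormedType.Exports.
Local Open Scope ring_scope.

Lemma fin_uniform (d : nat) (Pn : 'I_d -> nat -> Prop) :
  (forall j N N', (N <= N')%N -> Pn j N -> Pn j N') ->
  (forall j, exists N, Pn j N) -> exists N, forall j, Pn j N.
Proof.
move=> mono H; have [f Hf] := boolp.choice H.
exists (\max_(j : 'I_d) f j) => j; apply: mono (Hf j); exact: leq_bigmax.
Qed.

Lemma exp_small (R : realType) (δ η : R) : 0 < δ -> 0 < η ->
  exists N, forall n, (N <= n)%N -> expR (- (δ * n%:R)) <= η.
Proof.
move=> δ0 η0; exists (Num.trunc (δ * η)^-1).+1 => n Nn.
have h1 : (δ * η)^-1 < n%:R.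
  apply: lt_le_trans (truncnS_gt _) _; by rewrite ler_nat.
have n0 : 0 < (n%:R : R) by apply: le_lt_trans h1; rewrite invr_ge0 ltW // mulr_gt0.
rewrite expRN -[_^-1]div1r ler_pdivrMr ?expR_gt0 //.
apply: le_trans (_ : η * (1 + δ * n%:R) <= _); last by rewrite ler_pM2l // expR_ge1Dx.
apply: le_trans (_ : η * (δ * n%:R) <= _); last by rewrite ler_pM2l // lerDr.
move: h1; rewrite -[(δ * η)^-1]div1r ltr_pdivrMr ?mulr_gt0 // => /ltW h.
by have -> : η * (δ * n%:R) = n%:R * (δ * η) by ring.
Qed.

Section Final.
Variables (R : realType) (d : nat) (lam mu : 'I_d -> R) (P : 'M[R]_d) (nu gam : 'I_d -> R).
Hypothesis d0 : (0 < d)%N.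
Hypothesis lam0 : forall i, 0 <= lam i.
Hypothesis mu0 : forall i, 0 < mu i.
Hypothesis P0 : forall i j, 0 <= P i j.
Hypothesis Pdiag : forall i, P i i = 0.
Hypothesis Prow : forall i, \sum_(j < d) P i j <= 1.
Hypothesis hA : hypA lam mu P.
Hypothesis traffic : forall j, nu j = lam j + \sum_(i < d) nu i * P i j.
Hypothesis HG : inGamma P gam.

Local Notation e := (ee R d P gam).
Local Notation H := (hgam P gam).

Lemma gam0 i : 0 <= gam i. Proof. exact: HG.1. Qed.

Lemma Hg j : forall v, (forall k, 0 <= v k) -> (exists k, v k != 0) -> v j = 0 ->
  exists k, LL R d P gam j v < LL R d P gam k v.
Proof.
move=> v h1 h2 h3; have := HG.2 j v h1 h2 h3.
rewrite (bigmax_eq_arg _ j) // => [|i _]; last exact: leNye.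
by rewrite lte_fin => h; eexists; exact: h.
Qed.

Lemma H_ge j x : e j x <= H x.
Proof.
rewrite /hgam (bigD1 j) //= lerDl; apply: sumr_ge0 => k _; exact: ltW (expR_gt0 _).
Qed.

Lemma H_gt0 x : 0 < H x.
Proof. exact: lt_le_trans (expR_gt0 _) (H_ge (Ordinal d0) x). Qed.

Lemma weight j η : 0 < η -> exists N, forall x : 'I_d -> nat,
  (N <= \sum_(i < d) x i)%N -> x j = 0%N -> e j x / H x <= η.
Proof.
move=> η0; have [δ δ0 Hd] := @dom_nat R d P gam j (@Hg j) d0.
have [N HN] := @exp_small R δ η δ0 η0.
exists N => x Nx xj; have [k hk] := Hd x xj.
apply: le_trans (HN _ Nx).
apply: le_trans (_ : e j x / e k x <= _).
  rewrite ler_pM2l ?expR_gt0 // lef_pV2 ?posrE ?expR_gt0 ?H_gt0 //; exact: H_ge.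
rewrite /ee -expRB ler_expR lerNr opprB; exact: hk.
Qed.

Definition Mj j := mu j * gam j * (rr R d P j - 1) / (1 + gam j).
Definition drift j := gam j * AA R d lam P j + Mj j.
Definition cc j (y : 'I_d -> nat) := gam j * AA R d lam P j + (0 < y j)%N%:R * Mj j.
Definition gg x := gen lam mu P (hgam P gam) x / hgam P gam x.

Lemma gen_H x : gen lam mu P H x = \sum_(j < d) e j x * cc j x.
Proof.
have -> : H = (fun x => \sum_(j < d) e j x) by [].
rewrite gen_sum.
by apply: eq_bigr => j _; rewrite (@gen_ee R d lam mu P gam P0 Pdiag Prow gam0).
Qed.

Lemma gg_dev x (D : R) : gg x - D = \sum_(j < d) (e j x / H x) * (cc j x - D).
Proof.
have Hn : H x != 0 by rewrite gt_eqF // H_gt0.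
have -> : \sum_(j < d) (e j x / H x) * (cc j x - D) =
   \sum_(j < d) e j x * cc j x / H x - \sum_(j < d) e j x * D / H x.
  by rewrite -sumrB; apply: eq_bigr => j _; rewrite mulrBr; congr (_ - _); rewrite mulrAC.
rewrite /gg gen_H -!mulr_suml.
have -> : \sum_(i < d) e i x = H x by [].
by rewrite mulrAC divff // mul1r.
Qed.

Definition istar := [arg max_(i > Ordinal d0) drift i]%O.
Lemma drift_le j : drift j <= drift istar.
Proof. by rewrite /istar; case: arg_maxP => // i _ Hi; exact: Hi. Qed.

Local Notation Dm := (drift istar).
Definition KK j := `|drift j - Dm| + `|Mj j|.
Definition Ktot := \sum_(j < d) KK j.

Lemma KK_ge0 j : 0 <= KK j. Proof. by rewrite /KK addr_ge0. Qed.
Lemma Ktot_ge0 : 0 <= Ktot. Proof. by apply: sumr_ge0 => j _; exact: KK_ge0. Qed.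

Lemma cc_zero j x : x j = 0%N -> cc j x = drift j - Mj j.
Proof. by move=> xj; rewrite /cc /drift xj mul0r addr0 addrK. Qed.

Lemma cc_pos j x : (0 < x j)%N -> cc j x = drift j.
Proof. by move=> xj; rewrite /cc /drift xj; have -> : (true : nat)%:R = 1 :> R by []; rewrite mul1r. Qed.

Lemma w_ge0 j x : 0 <= e j x / H x.
Proof. by rewrite divr_ge0 // ltW // ?expR_gt0 ?H_gt0. Qed.

Lemma tbound η : 0 < η -> exists N, forall x : 'I_d -> nat, (N <= \sum_(i < d) x i)%N ->
  forall j, x j = 0%N -> `|e j x / H x * (cc j x - Dm)| <= η * KK j.
Proof.
move=> η0.
have [N HN] := @fin_uniform d (fun j N => forall x : 'I_d -> nat,
  (N <= \sum_(i < d) x i)%N -> x j = 0%N -> e j x / H x <= η)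
  (fun j N N' NN' h x Nx => h x (leq_trans NN' Nx)) (fun j => @weight j η η0).
exists N => x Nx j xj.
rewrite normrM ger0_norm ?w_ge0 // cc_zero //.
apply: ler_pM => //; first exact: w_ge0.
  exact: HN.
have -> : drift j - Mj j - Dm = (drift j - Dm) - Mj j by ring.
exact: ler_normB.
Qed.

Lemma upper ε : 0 < ε -> exists N, forall x : 'I_d -> nat, (N <= \sum_(i < d) x i)%N -> gg x <= Dm + ε.
Proof.
move=> ε0; pose η := ε / (Ktot + 1).
have K1 : 0 < Ktot + 1 by apply: lt_le_trans (ltr01) _; rewrite lerDr Ktot_ge0.
have η0 : 0 < η by rewrite divr_gt0.
have [N HN] := @tbound η η0; exists N => x Nx.
rewrite -lerBlDl gg_dev.
apply: le_trans (_ : \sum_(j < d) η * KK j <= _).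
  apply: ler_sum => j _; case: (posnP (x j)) => xj.
    by apply: le_trans (ler_norm _) (HN x Nx j xj).
  rewrite cc_pos //; apply: le_trans (_ : 0 <= _); last by rewrite mulr_ge0 ?KK_ge0 // ltW.
  by rewrite mulr_ge0_le0 ?w_ge0 // subr_le0 drift_le.
rewrite -mulr_sumr -/Ktot /η mulrAC ler_pdivrMr //.
have := Ktot_ge0; lra.
Qed.

Lemma lower ε : 0 < ε -> forall N, exists x : 'I_d -> nat, (N <= \sum_(i < d) x i)%N /\ Dm - ε <= gg x.
Proof.
move=> ε0 N; pose η := ε / (Ktot + 1).
have K1 : 0 < Ktot + 1 by apply: lt_le_trans (ltr01) _; rewrite lerDr Ktot_ge0.
have η0 : 0 < η by rewrite divr_gt0.
have [N0 HN] := @tbound η η0.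
pose n := (maxn N N0).+1.
pose x : 'I_d -> nat := fun k => if k == istar then n else 0%N.
have sx : (\sum_(i < d) x i)%N = n.
  rewrite (bigD1 istar) //= /x eqxx big1 ?addn0 // => k /negbTE -> //.
have N0n : (N0 <= \sum_(i < d) x i)%N by rewrite sx /n; apply: leqW; exact: leq_maxr.
exists x; split; first by rewrite sx /n; apply: leqW; exact: leq_maxl.
suff h : - (η * Ktot) <= gg x - Dm.
  have : η * Ktot <= ε by rewrite /η mulrAC ler_pdivrMr //; have := Ktot_ge0; lra.
  lra.
rewrite gg_dev /Ktot mulr_sumr -sumrN; apply: ler_sum => j _.
have [->|jn] := eqVneq j istar.
  rewrite cc_pos; last by rewrite /x eqxx.
  by rewrite subrr mulr0 oppr_le0 mulr_ge0 ?KK_ge0 // ltW.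
have xj : x j = 0%N by rewrite /x (negbTE jn).
have := HN x N0n j xj; rewrite ler_norml => /andP[h _]; exact: h.
Qed.

Lemma limsup_eq : limsup_infty gg = Dm%:E.
Proof.
apply/le_anti/andP; split.
- apply/lee_addgt0Pr => ε ε0; have [N HN] := @upper ε ε0.
  apply: (@le_trans _ _ (ereal_sup [set (gg x)%:E | x in [set x | (N <= \sum_(k < d) x k)%N]])).
    by apply: ereal_inf_lbound; exists N.
  apply: ge_ereal_sup => _ [x Nx <-]; rewrite -EFinD lee_fin; exact: HN.
- apply: le_ereal_inf_tmp => _ [N _ <-].
  apply/lee_addgt0Pr => ε ε0; have [x [Nx hx]] := @lower ε ε0 N.
  rewrite -leeBlDr //; apply: le_ereal_sup_tmp; exists (gg x)%:E; first by exists x.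
  by rewrite -EFinB lee_fin.
Qed.

Lemma drift_eq j : (gam j / invmx (1%:M - P) j j * (mu j / (1 + gam j) - nu j) = - drift j)%R.
Proof.
have U := @IP_unit R d lam mu P P0 Prow hA.
have hG := @G_eq R d P P0 Prow j U.
have Gn : invmx (1%:M - P) j j != 0%R.
  by apply/eqP => h; move: hG; rewrite h mul0r => /eqP; rewrite eq_sym oner_eq0.
have Gi : ((invmx (1%:M - P) j j)^-1 = 1 - rr R d P j)%R.
  by apply: (mulfI Gn); rewrite mulfV // hG.
rewrite /drift /Mj (@AA_eq R d lam P nu P0 Prow traffic j) Gi.
ring.
Qed.

Lemma rhs_eq : (- \big[Order.min/+oo%E]_(i < d)
         ((gam i / (invmx (1%:M - P)) i i) * (mu i / (1 + gam i) - nu i))%:E)%E = Dm%:E.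
Proof.
under eq_bigr do rewrite drift_eq.
have -> : \big[Order.min/+oo%E]_(i < d) (- drift i)%:E = (- Dm)%:E.
  apply/le_anti/andP; split; first exact: bigmin_le.
  apply: le_bigmin; first exact: leey.
  by move=> i _; rewrite lee_fin lerN2 drift_le.
by rewrite EFinN oppeK.
Qed.

End Final.

End Part6.
Import Part6.

Import Order.TTheory GRing.Theory Num.Theory.
Local Open Scope ring_scope.

Theorem theorem2p1 (R : realType) (d : nat) (lam mu : 'I_d -> R) (P : 'M[R]_d)
  (nu : 'I_d -> R) (gam : 'I_d -> R) :
  (0 < d)%N ->
  (forall i, 0 <= lam i) ->
  (forall i, 0 < mu i) ->
  (forall i j, 0 <= P i j) ->
  (forall i, P i i = 0) ->
  (forall i, \sum_(j < d) P i j <= 1) ->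
  hypA lam mu P ->
  (forall j, nu j = lam j + \sum_(i < d) nu i * P i j) ->
  inGamma P gam ->
  limsup_infty (fun x => gen lam mu P (hgam P gam) x / hgam P gam x)
  = (- \big[Order.min/+oo%E]_(i < d)
         ((gam i / (invmx (1%:M - P)) i i) * (mu i / (1 + gam i) - nu i))%:E)%E.
Proof.
move=> d0 lam0 mu0 P0 Pdiag Prow hA traffic HG.
rewrite (@rhs_eq R d lam mu P nu gam d0 P0 Prow hA traffic).
exact: (@limsup_eq R d lam mu P gam d0 P0 Pdiag Prow HG).
Qed.
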